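(* In the setup described in the context, assume the Levi-Civita connection $\nabla$ of $g$ is locally flat ($R=0$). Let $x\in T_pM$ induce a $Q$-basis, and let $\psi=\angle(x,Q^2x)$ be the $g$-angle, with $\psi\neq\pi/2$. Then $$\tilde r(x)=\tilde r(Qx)=\tilde r(Q^2x)=\tilde r(Q^3x)=\frac{1}{8\cos\psi}(3\tilde\tau^*+\tilde\tau)+\frac18(3\tilde\tau+\tilde\tau^* ).$$
   Context: Let $M$ be a 3-dimensional smooth manifold. Fix a coordinate chart $(x^1,x^2,x^3)$ with coordinate vector fields $\partial_i$. Structures: - $g$ is a Riemannian metric with $g(\partial_1,\partial_1)=g(\partial_2,\partial_2)=A$, $g(\partial_3,\partial_3)=B$ and $g(\partial_i,\partial_j)=0$ for $i\ne j$. Here $A,B$ are smooth positive functions. - $Q$ is the $(1,1)$-tensor field with $Q\partial_1=\partial_2$, $Q\partial_2=-\partial_1$, $Q\partial_3=\partial_3$. - $P=Q^2$ and $\tilde g(x,y)=g(x,Py)$. Curvature: - $\nabla$ and $\tilde\nabla$ are the Levi-Civita connections of $g$ and $\tilde g$, with curvatures $R$ and $\tilde R$ defined by $R(x,y)z=\nabla_x\nabla_yz-\nabla_y\nabla_xz-\nabla_{[x,y]}z$ (similarly for $\tilde R$). - $\tilde R(x,y,z,t)=\tilde g(\tilde R(x,y)z,t)$. - $\tilde\rho(y,z)=\tilde g^{ij}\tilde R(e_i,y,z,e_j)$, $\tilde\tau=\tilde g^{ij}\tilde\rho_{ij}$ and $\tilde\tau^*=g^{ij}\tilde\rho_{ij}$.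 - $\tilde r(x)=\tilde\rho(x,x)/\tilde g(x,x)$. Angles and $Q$-bases: - The $g$-angle is defined by $\cos\angle(u,v)=g(u,v)/\sqrt{g(u,u)g(v,v)}$. - A vector $x$ induces a $Q$-basis if $\{x,Qx,Q^2x\}$ is a basis of $T_pM$. *)

(* Defs.v *)
From Stdlib Require Import Reals List.
From Coquelicot Require Import Coquelicot.
Open Scope R_scope.

(** Points of the coordinate domain (a subset of R^3) and coordinates
    (indices 0,1,2 stand for x^1,x^2,x^3). *)
Definition pt := ((R * R) * R)%type.

Definition coord (p : pt) (i : nat) : R :=
  match i with
  | O => fst (fst p)
  | S O => snd (fst p)
  | _ => snd p
  end.

Definition upd (p : pt) (i : nat) (t : R) : pt :=
  match i with
  | O => ((t, snd (fst p)), snd p)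
  | S O => ((fst (fst p), t), snd p)
  | _ => ((fst (fst p), snd (fst p)), t)
  end.

Definition pd (i : nat) (f : pt -> R) (x : pt) : R :=
  Derive (fun t => f (upd x i t)) (coord x i).

Fixpoint pds (l : list nat) (f : pt -> R) : pt -> R :=
  match l with
  | nil => f
  | i :: l' => pd i (pds l' f)
  end.

Definition smooth_on (U : pt -> Prop) (f : pt -> R) : Prop :=
  forall l : list nat, (forall i, In i l -> (i < 3)%nat) ->
  forall x, U x ->
    continuous (pds l f) x /\
    (forall i, (i < 3)%nat -> ex_derive (fun t => pds l f (upd x i t)) (coord x i)).

Definition sum3 (f : nat -> R) : R := f 0%nat + f 1%nat + f 2%nat.

Definition idx3 (n : nat) : nat := Nat.modulo n 3.

Definition det3 (M : nat -> nat -> R) : R :=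
  M 0%nat 0%nat * (M 1%nat 1%nat * M 2%nat 2%nat - M 1%nat 2%nat * M 2%nat 1%nat)
  - M 0%nat 1%nat * (M 1%nat 0%nat * M 2%nat 2%nat - M 1%nat 2%nat * M 2%nat 0%nat)
  + M 0%nat 2%nat * (M 1%nat 0%nat * M 2%nat 1%nat - M 1%nat 1%nat * M 2%nat 0%nat).

(** (M^{-1})_{ij} = cofactor_{ji} / det M  (cyclic-index formula). *)
Definition inv3 (M : nat -> nat -> R) (i j : nat) : R :=
  (M (idx3 (j+1)) (idx3 (i+1)) * M (idx3 (j+2)) (idx3 (i+2))
   - M (idx3 (j+1)) (idx3 (i+2)) * M (idx3 (j+2)) (idx3 (i+1))) / det3 M.

(** A (pseudo-)Riemannian metric in coordinates: gm i j x = g(∂_i,∂_j) at x. *)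
Definition metric := nat -> nat -> pt -> R.

Definition at_pt (gm : metric) (x : pt) : nat -> nat -> R := fun i j => gm i j x.

(** Christoffel symbols of the Levi-Civita connection:
    ∇_{∂i} ∂j = Γ^k_{ij} ∂k. *)
Definition Gam (gm : metric) (k i j : nat) (x : pt) : R :=
  / 2 * sum3 (fun l => inv3 (at_pt gm x) k l *
                       (pd i (gm j l) x + pd j (gm i l) x - pd l (gm i j) x)).

(** Curvature R(∂i,∂j)∂k = Riem l i j k ∂l, with
    R(x,y)z = ∇x∇y z - ∇y∇x z - ∇[x,y] z. *)
Definition Riem (gm : metric) (l i j k : nat) (x : pt) : R :=
  pd i (Gam gm l j k) x - pd j (Gam gm l i k) x
  + sum3 (fun m => Gam gm m j k x * Gam gm l i m x - Gam gm m i k x * Gam gm l j m x).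

(** R(∂i,∂j,∂k,∂l) = gm(R(∂i,∂j)∂k, ∂l). *)
Definition Riem4 (gm : metric) (i j k l : nat) (x : pt) : R :=
  sum3 (fun m => Riem gm m i j k x * gm m l x).

Definition Ric (gm : metric) (a b : nat) (x : pt) : R :=
  sum3 (fun i => sum3 (fun j => inv3 (at_pt gm x) i j * Riem4 gm i a b j x)).

Definition trace_wrt (h : metric) (T : nat -> nat -> pt -> R) (x : pt) : R :=
  sum3 (fun i => sum3 (fun j => inv3 (at_pt h x) i j * T i j x)).

Definition vec := nat -> R.

Definition bil (M : nat -> nat -> R) (u v : vec) : R :=
  sum3 (fun i => sum3 (fun j => M i j * u i * v j)).

Definition gmet (A B : pt -> R) : metric :=
  fun i j x => if Nat.eqb i j then (if Nat.eqb i 2 then B x else A x) else 0.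

(** Matrix of Q: Qm i j = i-th component of Q ∂_j.
    Q∂1 = ∂2, Q∂2 = -∂1, Q∂3 = ∂3. *)
Definition Qm (i j : nat) : R :=
  match i, j with
  | 1%nat, 0%nat => 1
  | 0%nat, 1%nat => -1
  | 2%nat, 2%nat => 1
  | _, _ => 0
  end.

Definition Qv (v : vec) : vec := fun i => sum3 (fun j => Qm i j * v j).

Definition Pm (i j : nat) : R := sum3 (fun k => Qm i k * Qm k j).

(** tilde g(x,y) = g(x, P y): components g(∂i, P ∂j). *)
Definition gtil (A B : pt -> R) : metric :=
  fun i j x => sum3 (fun k => gmet A B i k x * Pm k j).

Definition rho_til (A B : pt -> R) := Ric (gtil A B).
Definition tau_til (A B : pt -> R) (x : pt) : R := trace_wrt (gtil A B) (rho_til A B) x.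
Definition tau_til_star (A B : pt -> R) (x : pt) : R := trace_wrt (gmet A B) (rho_til A B) x.

Definition r_til (A B : pt -> R) (p : pt) (v : vec) : R :=
  bil (at_pt (rho_til A B) p) v v / bil (at_pt (gtil A B) p) v v.

Definition gangle (A B : pt -> R) (p : pt) (u v : vec) : R :=
  acos (bil (at_pt (gmet A B) p) u v /
        sqrt (bil (at_pt (gmet A B) p) u u * bil (at_pt (gmet A B) p) v v)).

(** {u,v,w} is a basis of T_pM (three linearly independent vectors in a
    3-dimensional space). *)
Definition is_basis3 (u v w : vec) : Prop :=
  forall a b c : R,
    (forall i, (i < 3)%nat -> a * u i + b * v i + c * w i = 0) ->
    a = 0 /\ b = 0 /\ c = 0.

Definition induces_Q_basis (v : vec) : Prop := is_basis3 v (Qv v) (Qv (Qv v)).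

(* Main.v *)
Require Import Defs.
From Stdlib Require Import Reals List Lra Lia Psatz FunctionalExtensionality.
From Coquelicot Require Import Coquelicot.
Open Scope R_scope.

Definition dmet (D : nat -> pt -> R) : metric :=
  fun i j => if Nat.eqb i j then D i else (fun _ => 0).
Definition dl (a b : nat) : R := if Nat.eqb a b then 1 else 0.

Definition GamF (D : nat -> pt -> R) (k i j : nat) (y : pt) : R :=
  / 2 * (dl k j * pd i (D j) y + dl k i * pd j (D i) y - dl i j * pd k (D i) y) / D k y.

Lemma pd0 : forall i y, pd i (fun _ : pt => 0) y = 0.
Proof. intros. unfold pd. apply Derive_const. Qed.

Lemma Gam_dmet : forall D y k i j, (k < 3)%nat -> (i < 3)%nat -> (j < 3)%nat ->
  D 0%nat y <> 0 -> D 1%nat y <> 0 -> D 2%nat y <> 0 ->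
  Gam (dmet D) k i j y = GamF D k i j y.
Proof.
  intros D y k i j Hk Hi Hj H0 H1 H2.
  destruct k as [|[|[|k]]]; try lia; destruct i as [|[|[|i]]]; try lia;
  destruct j as [|[|[|j]]]; try lia;
  unfold Gam, GamF, sum3, inv3, det3, at_pt, dmet, idx3, dl; simpl;
  rewrite ?pd0; field; auto.
Qed.



Lemma deriv_quot (F1 F2 F3 G : R -> R) c1 c2 c3 x :
  ex_derive F1 x -> ex_derive F2 x -> ex_derive F3 x -> ex_derive G x -> G x <> 0 ->
  Derive (fun t => / 2 * (c1 * F1 t + c2 * F2 t - c3 * F3 t) / G t) x =
  / 2 * ((c1 * Derive F1 x + c2 * Derive F2 x - c3 * Derive F3 x) * G x
         - (c1 * F1 x + c2 * F2 x - c3 * F3 x) * Derive G x) / (G x)^2.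
Proof.
  intros H1 H2 H3 H4 H5.
  apply is_derive_unique. auto_derive.
  - repeat split; auto.
  - change (fun x0 : R => F1 x0) with F1; change (fun x0 : R => F2 x0) with F2;
    change (fun x0 : R => F3 x0) with F3; change (fun x0 : R => G x0) with G.
    field. auto.
Qed.

Lemma upd_coord : forall p i, upd p i (coord p i) = p.
Proof. intros [[a b] c] [|[|i]]; reflexivity. Qed.

Definition dGamF (D : nat -> pt -> R) (i l j k : nat) (p : pt) : R :=
  / 2 * ((dl l k * pd i (pd j (D k)) p + dl l j * pd i (pd k (D j)) p
          - dl j k * pd i (pd l (D j)) p) * D l p
         - (dl l k * pd j (D k) p + dl l j * pd k (D j) p - dl j k * pd l (D j) p)
           * pd i (D l) p) / (D l p)^2.

Lemma pd_Gam : forall D p,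
  (forall i, (i < 3)%nat -> locally (coord p i) (fun t =>
      D 0%nat (upd p i t) <> 0 /\ D 1%nat (upd p i t) <> 0 /\ D 2%nat (upd p i t) <> 0)) ->
  (forall b i, (b < 3)%nat -> (i < 3)%nat -> ex_derive (fun t => D b (upd p i t)) (coord p i)) ->
  (forall a b i, (a < 3)%nat -> (b < 3)%nat -> (i < 3)%nat ->
      ex_derive (fun t => pd a (D b) (upd p i t)) (coord p i)) ->
  forall i l j k, (i < 3)%nat -> (l < 3)%nat -> (j < 3)%nat -> (k < 3)%nat ->
  pd i (Gam (dmet D) l j k) p = dGamF D i l j k p.
Proof.
  intros D p HZ H1 H2 i l j k Hi Hl Hj Hk.
  unfold pd at 1.
  rewrite (Derive_ext_loc _ (fun t => GamF D l j k (upd p i t))).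
  2:{ apply (filter_imp (fun t => D 0%nat (upd p i t) <> 0 /\ D 1%nat (upd p i t) <> 0 /\ D 2%nat (upd p i t) <> 0)).
      - intros t [a [b c]]. apply Gam_dmet; auto.
      - apply HZ; auto. }
  unfold GamF.
  rewrite (deriv_quot (fun t => pd j (D k) (upd p i t)) (fun t => pd k (D j) (upd p i t))
     (fun t => pd l (D j) (upd p i t)) (fun t => D l (upd p i t))); auto.
  - unfold dGamF. rewrite upd_coord. reflexivity.
  - rewrite upd_coord. destruct (HZ i Hi) as [e He].
    destruct (He (coord p i) (ball_center _ _)) as [a [b c]].
    rewrite upd_coord in a, b, c.
    destruct l as [|[|[|l]]]; auto; lia.
Qed.

Definition RiemF D l i j k p :=
  dGamF D i l j k p - dGamF D j l i k p
  + sum3 (fun m => GamF D m j k p * GamF D l i m p - GamF D m i k p * GamF D l j m p).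

Lemma Riem_dmet : forall D p,
  (forall i, (i < 3)%nat -> locally (coord p i) (fun t =>
      D 0%nat (upd p i t) <> 0 /\ D 1%nat (upd p i t) <> 0 /\ D 2%nat (upd p i t) <> 0)) ->
  (forall b i, (b < 3)%nat -> (i < 3)%nat -> ex_derive (fun t => D b (upd p i t)) (coord p i)) ->
  (forall a b i, (a < 3)%nat -> (b < 3)%nat -> (i < 3)%nat ->
      ex_derive (fun t => pd a (D b) (upd p i t)) (coord p i)) ->
  D 0%nat p <> 0 -> D 1%nat p <> 0 -> D 2%nat p <> 0 ->
  forall l i j k, (l < 3)%nat -> (i < 3)%nat -> (j < 3)%nat -> (k < 3)%nat ->
  Riem (dmet D) l i j k p = RiemF D l i j k p.
Proof.
  intros D p HZ H1 H2 Z0 Z1 Z2 l i j k Hl Hi Hj Hk.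
  unfold Riem, RiemF, sum3.
  rewrite !pd_Gam by (auto; lia).
  rewrite !Gam_dmet by (auto; lia).
  reflexivity.
Qed.

Lemma Ric_dmet : forall D p a b,
  D 0%nat p <> 0 -> D 1%nat p <> 0 -> D 2%nat p <> 0 ->
  Ric (dmet D) a b p = sum3 (fun i => Riem (dmet D) i i a b p).
Proof.
  intros D p a b Z0 Z1 Z2.
  unfold Ric, Riem4, sum3, inv3, det3, at_pt, dmet, idx3; simpl.
  field; auto.
Qed.


Definition DA (A B : pt -> R) (i : nat) : pt -> R := match i with 2%nat => B | _ => A end.
Definition DT (A B : pt -> R) (i : nat) : pt -> R :=
  match i with 0%nat => fun y => - A y | 1%nat => fun y => - A y | 2%nat => B | _ => fun _ => 0 end.

Lemma gmet_eq : forall A B, gmet A B = dmet (DA A B).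
Proof.
  intros A B. extensionality i. extensionality j. extensionality y.
  unfold gmet, dmet. destruct (Nat.eqb i j) eqn:E; [|reflexivity].
  apply Nat.eqb_eq in E; subst. destruct j as [|[|[|j]]]; reflexivity.
Qed.

Lemma gtil_eq : forall A B, gtil A B = dmet (DT A B).
Proof.
  intros A B. extensionality i. extensionality j. extensionality y.
  unfold gtil, dmet, sum3, Pm, sum3, Qm, gmet.
  destruct i as [|[|[|i]]]; destruct j as [|[|[|j]]]; simpl; try ring.
  destruct (Nat.eqb i j); simpl; ring.
Qed.

Lemma loc_U : forall (U : pt -> Prop) p, open U -> U p ->
  forall i, locally (coord p i) (fun t => U (upd p i t)).
Proof.
  intros U p HU Hp i. destruct (HU p Hp) as [e He]. exists e. intros t Ht.
  apply He. destruct p as [[a b] c].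
  destruct i as [|[|i]]; simpl in *; repeat split; try apply ball_center; exact Ht.
Qed.


Lemma pdN : forall (F : pt -> R) j y, pd j (fun y => - F y) y = - pd j F y.
Proof. intros. unfold pd. apply Derive_opp. Qed.

Lemma pdpdN : forall (F : pt -> R) i j y, pd i (pd j (fun y => - F y)) y = - pd i (pd j F) y.
Proof.
  intros. unfold pd at 1.
  rewrite (Derive_ext _ (fun t => - pd j F (upd y i t))) by (intros; apply pdN).
  apply Derive_opp.
Qed.

Lemma pos_nz : forall x, 0 < x -> x <> 0.
Proof. intros; lra. Qed.

Lemma neg_nz : forall x, 0 < x -> - x <> 0.
Proof. intros; lra. Qed.

Section S.
Variables (U : pt -> Prop) (A B : pt -> R).
Hypothesis HU : open U.
Hypothesis HA : smooth_on U A.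
Hypothesis HB : smooth_on U B.
Hypothesis HApos : forall y, U y -> 0 < A y.
Hypothesis HBpos : forall y, U y -> 0 < B y.
Variable p : pt.
Hypothesis Hp : U p.

Lemma exA0 : forall (F : pt -> R), smooth_on U F -> forall i, (i < 3)%nat ->
  ex_derive (fun t => F (upd p i t)) (coord p i).
Proof.
  intros F HF i Hi. destruct (HF nil ltac:(intros ? [] ) p Hp) as [_ H]. apply H; auto.
Qed.

Lemma exA1 : forall (F : pt -> R), smooth_on U F -> forall a i, (a < 3)%nat -> (i < 3)%nat ->
  ex_derive (fun t => pd a F (upd p i t)) (coord p i).
Proof.
  intros F HF a i Ha Hi.
  destruct (HF (a :: nil) ltac:(intros ? [<-|[]]; auto) p Hp) as [_ H]. apply H; auto.
Qed.

Lemma HZ_gen : forall i, (i < 3)%nat -> locally (coord p i) (fun t => 0 < A (upd p i t) /\ 0 < B (upd p i t)).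
Proof.
  intros i Hi. apply (filter_imp (fun t => U (upd p i t))).
  - intros t Ht. split; auto.
  - apply loc_U; auto.
Qed.

Lemma DA_hyps :
  (forall i, (i < 3)%nat -> locally (coord p i) (fun t =>
      DA A B 0%nat (upd p i t) <> 0 /\ DA A B 1%nat (upd p i t) <> 0 /\ DA A B 2%nat (upd p i t) <> 0)) /\
  (forall b i, (b < 3)%nat -> (i < 3)%nat -> ex_derive (fun t => DA A B b (upd p i t)) (coord p i)) /\
  (forall a b i, (a < 3)%nat -> (b < 3)%nat -> (i < 3)%nat ->
      ex_derive (fun t => pd a (DA A B b) (upd p i t)) (coord p i)).
Proof.
  split; [|split].
  - intros i Hi. eapply filter_imp; [|apply (HZ_gen i Hi)]. intros t [H1 H2]. simpl. repeat split; first [apply pos_nz; assumption | apply neg_nz; assumption].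
  - intros b i Hb Hi. destruct b as [|[|[|b]]]; simpl; try apply exA0; auto; lia.
  - intros a b i Ha Hb Hi. destruct b as [|[|[|b]]]; simpl; try apply exA1; auto; lia.
Qed.

Lemma DT_hyps :
  (forall i, (i < 3)%nat -> locally (coord p i) (fun t =>
      DT A B 0%nat (upd p i t) <> 0 /\ DT A B 1%nat (upd p i t) <> 0 /\ DT A B 2%nat (upd p i t) <> 0)) /\
  (forall b i, (b < 3)%nat -> (i < 3)%nat -> ex_derive (fun t => DT A B b (upd p i t)) (coord p i)) /\
  (forall a b i, (a < 3)%nat -> (b < 3)%nat -> (i < 3)%nat ->
      ex_derive (fun t => pd a (DT A B b) (upd p i t)) (coord p i)).
Proof.
  split; [|split].
  - intros i Hi. eapply filter_imp; [|apply (HZ_gen i Hi)]. intros t [H1 H2]. simpl. repeat split; first [apply pos_nz; assumption | apply neg_nz; assumption].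
  - intros b i Hb Hi. destruct b as [|[|[|b]]]; simpl; try lia.
    1,2: apply (ex_derive_ext (fun t => opp (A (upd p i t)))); [reflexivity|];
         exact (@ex_derive_opp R_AbsRing R_NormedModule _ _ (exA0 A HA i Hi)).
    apply exA0; auto.
  - intros a b i Ha Hb Hi. destruct b as [|[|[|b]]]; simpl; try lia.
    1,2: apply (ex_derive_ext (fun t => opp (pd a A (upd p i t))));
         [intros; simpl; rewrite pdN; reflexivity|];
         exact (@ex_derive_opp R_AbsRing R_NormedModule _ _ (exA1 A HA a i Ha Hi)).
    apply exA1; auto.
Qed.

Lemma DTnz : DT A B 0%nat p <> 0 /\ DT A B 1%nat p <> 0 /\ DT A B 2%nat p <> 0.
Proof. simpl. repeat split; first [apply neg_nz; now auto | apply pos_nz; now auto]. Qed.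
Lemma DAnz : DA A B 0%nat p <> 0 /\ DA A B 1%nat p <> 0 /\ DA A B 2%nat p <> 0.
Proof. simpl. repeat split; apply pos_nz; auto. Qed.

Ltac expand :=
  rewrite ?gtil_eq, ?gmet_eq;
  let T1 := fresh in let T2 := fresh in let T3 := fresh in
  let A1 := fresh in let A2 := fresh in let A3 := fresh in
  let Z1 := fresh in let Z2 := fresh in let Z3 := fresh in
  let W1 := fresh in let W2 := fresh in let W3 := fresh in
  destruct DT_hyps as [T1 [T2 T3]]; destruct DA_hyps as [A1 [A2 A3]];
  destruct DTnz as [Z1 [Z2 Z3]]; destruct DAnz as [W1 [W2 W3]];
  rewrite ?(Ric_dmet (DT A B) p _ _ Z1 Z2 Z3); unfold sum3;
  rewrite ?(Riem_dmet (DT A B) p T1 T2 T3 Z1 Z2 Z3) by lia;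
  rewrite ?(Riem_dmet (DA A B) p A1 A2 A3 W1 W2 W3) by lia;
  unfold RiemF, dGamF, GamF, sum3, dl; simpl DT; simpl DA; cbn [Nat.eqb];
  rewrite ?pdpdN, ?pdN.

Lemma R01 : Ric (gtil A B) 0 1 p = - Riem (gmet A B) 0 0 1 0 p + A p / B p * Riem (gmet A B) 1 0 2 2 p.
Proof. expand. field. split; apply pos_nz; auto. Qed.

Lemma R10 : Ric (gtil A B) 1 0 p = Riem (gmet A B) 0 0 1 0 p + A p / B p * Riem (gmet A B) 0 1 2 2 p.
Proof. expand. field. split; apply pos_nz; auto. Qed.

Lemma R02 : Ric (gtil A B) 0 2 p = - Riem (gmet A B) 0 0 2 0 p - Riem (gmet A B) 0 1 2 1 p - Riem (gmet A B) 2 0 2 2 p.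
Proof. expand. field. split; apply pos_nz; auto. Qed.

Lemma R20 : Ric (gtil A B) 2 0 p = Riem (gmet A B) 0 0 2 0 p - Riem (gmet A B) 0 1 2 1 p.
Proof. expand. field. split; apply pos_nz; auto. Qed.

Lemma R12 : Ric (gtil A B) 1 2 p = Riem (gmet A B) 0 0 1 2 p - Riem (gmet A B) 2 1 2 2 p.
Proof. expand. field. split; apply pos_nz; auto. Qed.

Lemma R21 : Ric (gtil A B) 2 1 p = - Riem (gmet A B) 0 0 1 2 p + 2 * Riem (gmet A B) 0 0 2 1 p.
Proof. expand. field. split; apply pos_nz; auto. Qed.

Lemma R00 : Ric (gtil A B) 0 0 p - Ric (gtil A B) 1 1 p = A p / B p * (Riem (gmet A B) 0 0 2 2 p - Riem (gmet A B) 1 1 2 2 p).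
Proof. expand. field. split; apply pos_nz; auto. Qed.

End S.


Section F.
Variables (A B : pt -> R) (p : pt) (al be : R).
Hypothesis Ha : 0 < A p.
Hypothesis Hb : 0 < B p.
Hypothesis E00 : Ric (gtil A B) 0 0 p = al.
Hypothesis E11 : Ric (gtil A B) 1 1 p = al.
Hypothesis E22 : Ric (gtil A B) 2 2 p = be.
Hypothesis Z01 : Ric (gtil A B) 0 1 p = 0.
Hypothesis Z10 : Ric (gtil A B) 1 0 p = 0.
Hypothesis Z02 : Ric (gtil A B) 0 2 p = 0.
Hypothesis Z20 : Ric (gtil A B) 2 0 p = 0.
Hypothesis Z12 : Ric (gtil A B) 1 2 p = 0.
Hypothesis Z21 : Ric (gtil A B) 2 1 p = 0.

Lemma r_til_val : forall v : vec,
  r_til A B p v = (al * (v 0%nat * v 0%nat + v 1%nat * v 1%nat) + be * (v 2%nat * v 2%nat))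
      / (- A p * (v 0%nat * v 0%nat + v 1%nat * v 1%nat) + B p * (v 2%nat * v 2%nat)).
Proof.
  intros v. unfold r_til, bil, sum3, at_pt, rho_til.
  rewrite E00, E11, E22, Z01, Z10, Z02, Z20, Z12, Z21.
  rewrite gtil_eq. unfold dmet; simpl.
  unfold Rdiv; f_equal; [ring | f_equal; ring].
Qed.

Lemma tau_val : tau_til A B p = -2 * al / A p + be / B p.
Proof.
  unfold tau_til, trace_wrt, sum3, inv3, det3, at_pt, idx3, rho_til; simpl.
  rewrite E00, E11, E22, Z01, Z10, Z02, Z20, Z12, Z21.
  rewrite gtil_eq. unfold dmet; simpl.
  field. split; lra.
Qed.

Lemma taus_val : tau_til_star A B p = 2 * al / A p + be / B p.
Proof.
  unfold tau_til_star, trace_wrt, sum3, inv3, det3, at_pt, idx3, rho_til; simpl.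
  rewrite E00, E11, E22, Z01, Z10, Z02, Z20, Z12, Z21.
  rewrite gmet_eq. unfold dmet; simpl.
  field. split; lra.
Qed.
End F.


Theorem proposition5p8
  (U : pt -> Prop) (A B : pt -> R)
  (HU : open U)
  (HA : smooth_on U A) (HB : smooth_on U B)
  (HApos : forall y, U y -> 0 < A y) (HBpos : forall y, U y -> 0 < B y)
  (Hflat : forall y, U y -> forall l i j k : nat,
      (l < 3)%nat -> (i < 3)%nat -> (j < 3)%nat -> (k < 3)%nat ->
      Riem (gmet A B) l i j k y = 0)
  (p : pt) (Hp : U p) (x : vec)
  (HQ : induces_Q_basis x)
  (Hpsi : gangle A B p x (Qv (Qv x)) <> PI / 2) :
  let psi := gangle A B p x (Qv (Qv x)) in
  let F := / (8 * cos psi) * (3 * tau_til_star A B p + tau_til A B p)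
           + / 8 * (3 * tau_til A B p + tau_til_star A B p) in
  r_til A B p x = r_til A B p (Qv x) /\
  r_til A B p (Qv x) = r_til A B p (Qv (Qv x)) /\
  r_til A B p (Qv (Qv x)) = r_til A B p (Qv (Qv (Qv x))) /\
  r_til A B p (Qv (Qv (Qv x))) = F.
Proof.
  intros psi F. subst psi F.
  assert (Fl : forall l i j k, (l < 3)%nat -> (i < 3)%nat -> (j < 3)%nat -> (k < 3)%nat ->
     Riem (gmet A B) l i j k p = 0) by (intros; apply Hflat; auto).
  pose proof (R01 U A B HU HA HB HApos HBpos p Hp) as E01.
  pose proof (R10 U A B HU HA HB HApos HBpos p Hp) as E10.
  pose proof (R02 U A B HU HA HB HApos HBpos p Hp) as E02.
  pose proof (R20 U A B HU HA HB HApos HBpos p Hp) as E20.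
  pose proof (R12 U A B HU HA HB HApos HBpos p Hp) as E12.
  pose proof (R21 U A B HU HA HB HApos HBpos p Hp) as E21.
  pose proof (R00 U A B HU HA HB HApos HBpos p Hp) as E00.
  repeat rewrite Fl in E01 by lia; repeat rewrite Fl in E10 by lia; repeat rewrite Fl in E02 by lia;
  repeat rewrite Fl in E20 by lia; repeat rewrite Fl in E12 by lia; repeat rewrite Fl in E21 by lia;
  repeat rewrite Fl in E00 by lia.
  set (al := Ric (gtil A B) 0 0 p) in *.
  set (be := Ric (gtil A B) 2 2 p) in *.
  assert (E11 : Ric (gtil A B) 1 1 p = al) by lra.
  assert (Z01 : Ric (gtil A B) 0 1 p = 0) by lra.
  assert (Z10 : Ric (gtil A B) 1 0 p = 0) by lra.
  assert (Z02 : Ric (gtil A B) 0 2 p = 0) by lra.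
  assert (Z20 : Ric (gtil A B) 2 0 p = 0) by lra.
  assert (Z12 : Ric (gtil A B) 1 2 p = 0) by lra.
  assert (Z21 : Ric (gtil A B) 2 1 p = 0) by lra.
  clear E01 E10 E02 E20 E12 E21 E00.
  pose proof (HApos p Hp) as Ha. pose proof (HBpos p Hp) as Hb.
  pose proof (r_til_val A B p al be eq_refl E11 eq_refl Z01 Z10 Z02 Z20 Z12 Z21) as RV.
  rewrite (tau_val A B p al be Ha Hb eq_refl E11 eq_refl Z01 Z10 Z02 Z20 Z12 Z21).
  rewrite (taus_val A B p al be Ha Hb eq_refl E11 eq_refl Z01 Z10 Z02 Z20 Z12 Z21).
  rewrite !RV.
  assert (Q0 : forall v, Qv v 0%nat = - v 1%nat) by (intros; unfold Qv, sum3, Qm; simpl; ring).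
  assert (Q1 : forall v, Qv v 1%nat = v 0%nat) by (intros; unfold Qv, sum3, Qm; simpl; ring).
  assert (Q2 : forall v, Qv v 2%nat = v 2%nat) by (intros; unfold Qv, sum3, Qm; simpl; ring).
  assert (Hg : gangle A B p x (Qv (Qv x)) =
     acos ((- A p * (x 0%nat * x 0%nat + x 1%nat * x 1%nat) + B p * (x 2%nat * x 2%nat)) /
           (A p * (x 0%nat * x 0%nat + x 1%nat * x 1%nat) + B p * (x 2%nat * x 2%nat)))).
  { unfold gangle, bil, sum3, at_pt. rewrite gmet_eq. unfold dmet; simpl.
    repeat (rewrite Q0 || rewrite Q1 || rewrite Q2).
    rewrite <- sqrt_square with (x := A p * (x 0%nat * x 0%nat + x 1%nat * x 1%nat) + B p * (x 2%nat * x 2%nat)).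
    2:{ assert (0 <= x 0%nat * x 0%nat) by nra. assert (0 <= x 1%nat * x 1%nat) by nra.
        assert (0 <= x 2%nat * x 2%nat) by nra. nra. }
    f_equal. f_equal; [ring | f_equal; ring]. }
  rewrite Hg in Hpsi |- *.
  repeat (rewrite Q0 || rewrite Q1 || rewrite Q2).
  set (x0 := x 0%nat) in *. set (x1 := x 1%nat) in *. set (x2 := x 2%nat) in *.
  assert (Hx : x0 <> 0 \/ x1 <> 0 \/ x2 <> 0).
  { destruct (Req_dec x0 0) as [h0|h0]; [|now left].
    destruct (Req_dec x1 0) as [h1|h1]; [|now right; left].
    destruct (Req_dec x2 0) as [h2|h2]; [|now right; right].
    exfalso. destruct (HQ 1 0 0) as [H _]; [|lra].
    intros i Hi. destruct i as [|[|[|i]]]; try lia; simpl; fold x0 x1 x2; lra. }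
  clearbody x0 x1 x2.
  set (a := A p) in *. set (b := B p) in *. clearbody a b.
  assert (HS : 0 < a * (x0 * x0 + x1 * x1) + b * (x2 * x2)).
  { destruct Hx as [h|[h|h]].
    - assert (0 < x0 * x0) by nra. assert (0 <= x1 * x1) by nra. assert (0 <= x2 * x2) by nra. nra.
    - assert (0 < x1 * x1) by nra. assert (0 <= x0 * x0) by nra. assert (0 <= x2 * x2) by nra. nra.
    - assert (0 < x2 * x2) by nra. assert (0 <= x1 * x1) by nra. assert (0 <= x0 * x0) by nra. nra. }
  set (S := a * (x0 * x0 + x1 * x1) + b * (x2 * x2)) in *.
  set (T := - a * (x0 * x0 + x1 * x1) + b * (x2 * x2)) in *.
  assert (HT : T <> 0).
  { intro h. apply Hpsi. rewrite h. unfold Rdiv. rewrite Rmult_0_l. apply acos_0. }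
  rewrite cos_acos.
  2:{ assert (0 <= x0 * x0) by nra. assert (0 <= x1 * x1) by nra. assert (0 <= x2 * x2) by nra.
      assert (-S <= T <= S) by (unfold S, T; nra).
      assert (HSi : S * / S = 1) by (field; lra).
      assert (0 < / S) by (apply Rinv_0_lt_compat; lra).
      unfold Rdiv; split; nra. }
  unfold S, T in *.
  repeat split; field; repeat split; try assumption; try lra; try (intro h; apply HT; nra).
Qed.
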